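(* Let $G$ be an ADMG and let $\{x,y\}$, $Z$, $W$ be pairwise disjoint node sets of $G$ (with $x\neq y$ nodes). Then $(Z,W)$ is a valid conditional instrumental set relative to $(x,y)$ in $G$ if and only if all of the following hold: (i) there is no directed path from $x$ to $y$ that contains a node in $W$; (ii) there exists a walk from some node of $Z$ to $x$ that is open given $W$; (iii) there is no walk from a node of $Z$ to $y$ that is open given $W$ and does not end with a segment of the form $x\to\cdots\to y$ (a walk $v_1,\dots,v_r$ with edges $e_1,\dots,e_{r-1}$ ends with such a segment if there is an index $i$ with $v_i=x$ and every edge $e_j$, $j\ge i$, is of the form $v_j\to v_{j+1}$).
   Context: An ADMG $G$ has a finite node set $V$, directed edges $u\to v$ and bidirected edges $u\leftrightarrow v$, such that the subgraph of directed edges has no directed cycle. A walk is a sequence of nodes $v_1,\dots,v_r$ with edges $e_1,\dots,e_{r-1}$, $e_i$ joining $v_i$ and $v_{i+1}$ (nodes may repeat); a path is a walk with distinct nodes. A walk is directed from $v_1$ to $v_r$ if each $e_i$ is $v_i\to v_{i+1}$. $u$ is a parent of $v$ if $u\to v$; $\mathrm{de}_G(v)$ ($\mathrm{an}_G(v)$) is the set of nodes reachable from $v$ by a directed path (from which $v$ is reachable by a directed path), including $v$ itself; for sets take unions. A non-endpoint occurrence $v_i$ ($1<i<r$) on a walk is a collider if both $e_{i-1}$ and $e_i$ have an arrowhead at $v_i$ (each is of the form $\cdot\to v_i$ or $\cdot\leftrightarrow v_i$); otherwise it is a non-collider. A walk is open given $W$ if every collider on it is in $W$ and every non-collider is not in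 $W$. For disjoint sets $A,B,W$, $A\not\perp_G B\mid W$ (d-connected) if some walk from a node of $A$ to a node of $B$ is open given $W$; otherwise $A\perp_G B\mid W$. Let $\mathrm{causal}_G(x,y)=(\mathrm{de}_G(x)\cap\mathrm{an}_G(y))\setminus\{x\}$ and $\mathrm{forb}_G(x,y)=\mathrm{de}_G(\mathrm{causal}_G(x,y))\cup\{x\}$. Let $\tilde G$ be $G$ with all directed edges $x\to c$, $c\in\mathrm{causal}_G(x,y)$, removed. For pairwise disjoint $\{x,y\},Z,W$, $(Z,W)$ is a valid conditional instrumental set relative to $(x,y)$ in $G$ iff (a) $(Z\cup W)\cap\mathrm{forb}_G(x,y)=\emptyset$, (b) $x\not\perp_G Z\mid W$, and (c) $y\perp_{\tilde G} Z\mid W$. *)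

(* Defs.v *)
From mathcomp Require Import all_boot.
Set Implicit Arguments. Unset Strict Implicit. Unset Printing Implicit Defensive.

Record ADMG (V : finType) := MkADMG {
  dir : rel V;
  bid : rel V;
  bid_sym : symmetric bid;
  bid_irr : irreflexive bid;
  dir_acyclic : forall u v, dir u v -> ~~ connect dir v u
}.

(* Kind of the edge e_i joining v_i and v_(i+1):
   Fwd : v_i -> v_(i+1);  Bwd : v_i <- v_(i+1);  Bid : v_i <-> v_(i+1). *)
Inductive etype := Fwd | Bwd | Bid.

Definition etype_eqb (a b : etype) : bool :=
  match a, b with Fwd, Fwd | Bwd, Bwd | Bid, Bid => true | _, _ => false end.

Section Walks.
Variable V : finType.

Definition edge_ok (d b : rel V) (u : V) (k : etype) (v : V) : bool :=
  match k with Fwd => d u v | Bwd => d v u | Bid => b u v end.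

(* A walk is a start node u together with the list of steps (e_i, v_(i+1)). *)
Fixpoint is_walk (d b : rel V) (u : V) (s : seq (etype * V)) : bool :=
  match s with
  | [::] => true
  | (k, v) :: s' => edge_ok d b u k v && is_walk d b v s'
  end.

Definition walk_end (u : V) (s : seq (etype * V)) : V := last u (map snd s).

Definition head_at_end (k : etype) : bool :=
  match k with Fwd | Bid => true | Bwd => false end.
Definition head_at_start (k : etype) : bool :=
  match k with Bwd | Bid => true | Fwd => false end.

Definition collider (kin kout : etype) : bool := head_at_end kin && head_at_start kout.

(* openness of the interior occurrences, [v] being an interior node entered by [kin] *)
Fixpoint open_from (W : {set V}) (kin : etype) (v : V) (s : seq (etype * V)) : bool :=
  match s with
  | [::] => true
  | (k, w) :: s' =>
      (if collider kin k then v \in W else v \notin W) && open_from W k w s'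
  end.

Definition open_walk (W : {set V}) (u : V) (s : seq (etype * V)) : bool :=
  match s with
  | [::] => true
  | (k, w) :: s' => open_from W k w s'
  end.

Definition dconn (d b : rel V) (A B W : {set V}) : Prop :=
  exists (u : V) (s : seq (etype * V)),
    [/\ u \in A, walk_end u s \in B, is_walk d b u s & open_walk W u s].

Definition ends_with_dir_seg (x u : V) (s : seq (etype * V)) : bool :=
  has (fun i => (nth u (u :: map snd s) i == x) &&
                all (fun k => etype_eqb k Fwd) (drop i (map fst s)))
      (iota 0 (size s).+1).

End Walks.

Section Causal.
Variables (V : finType) (G : ADMG V).

Definition de (v : V) : {set V} := [set w | connect (dir G) v w].
Definition an (v : V) : {set V} := [set w | connect (dir G) w v].

Definition causal (x y : V) : {set V} := (de x :&: an y) :\ x.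
Definition forb (x y : V) : {set V} :=
  (\bigcup_(c in causal x y) de c) :|: [set x].

Definition dir_tilde (x y : V) : rel V :=
  fun u v => dir G u v && ~~ ((u == x) && (v \in causal x y)).

Definition dsep (A B W : {set V}) : Prop := ~ dconn (dir G) (bid G) A B W.
Definition dsep_tilde (x y : V) (A B W : {set V}) : Prop :=
  ~ dconn (dir_tilde x y) (bid G) A B W.

Definition valid_cond_instr (x y : V) (Z W : {set V}) : Prop :=
  [/\ [disjoint (Z :|: W) & forb x y],
      dconn (dir G) (bid G) [set x] Z W &
      dsep_tilde x y [set y] Z W].

Definition dir_path (x y : V) (p : seq V) : bool :=
  [&& path (dir G) x p, last x p == y & uniq (x :: p)].

End Causal.

(* Main.v *)
Require Import Defs.
From mathcomp Require Import all_boot.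
Set Implicit Arguments. Unset Strict Implicit. Unset Printing Implicit Defensive.

Section W1.
Variable V : finType.
Implicit Types (d b : rel V) (W : {set V}) (s t : seq (etype * V)).

Definition isF (k : etype) := etype_eqb k Fwd.
Definition flipk (k : etype) := match k with Fwd => Bwd | Bwd => Fwd | Bid => Bid end.
Definition cnd W kin k (v : V) := if collider kin k then v \in W else v \notin W.

Lemma walk_end_cat u s t : walk_end u (s ++ t) = walk_end (walk_end u s) t.
Proof. by rewrite /walk_end map_cat last_cat. Qed.

Lemma is_walk_cat d b u s t :
  is_walk d b u (s ++ t) = is_walk d b u s && is_walk d b (walk_end u s) t.
Proof.
elim: s u => [|[k v] s IH] u //=. by rewrite IH andbA.
Qed.

Lemma open_from_cat W k v s t :
  open_from W k v (s ++ t) =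
  open_from W k v s && open_from W (last k (map fst s)) (walk_end v s) t.
Proof.
elim: s k v => [|[k2 w] s IH] k v //=. by rewrite IH andbA.
Qed.

Lemma open_walk_from W z s : z \notin W -> open_walk W z s -> open_from W Bwd z s.
Proof. by case: s => [|[k w] s] //= ->. Qed.

Lemma open_from_walk W k z s : open_from W k z s -> open_walk W z s.
Proof. by case: s => [|[k2 w] s] //= /andP[]. Qed.

Lemma is_walk_mono d1 d2 b u s : (forall a c, d1 a c -> d2 a c) ->
  is_walk d1 b u s -> is_walk d2 b u s.
Proof.
move=> H; elim: s u => [|[k v] s IH] u //= /andP[e /IH ->]; rewrite andbT.
by case: k e => /=; auto.
Qed.

Fixpoint revw (u : V) s : seq (etype * V) :=
  match s with [::] => [::] | (k, v) :: s' => rcons (revw v s') (flipk k, u) end.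

Lemma walk_end_cons u k v s : walk_end u ((k, v) :: s) = walk_end v s.
Proof. by []. Qed.

Lemma walk_end_rcons u s a : walk_end u (rcons s a) = a.2.
Proof. by rewrite /walk_end map_rcons last_rcons. Qed.

Lemma walk_end_revw u s : walk_end (walk_end u s) (revw u s) = u.
Proof. by case: s => [|[k v] s] //=; rewrite walk_end_rcons. Qed.

Lemma is_walk_revw d b u s : symmetric b ->
  is_walk d b (walk_end u s) (revw u s) = is_walk d b u s.
Proof.
move=> bs; elim: s u => [|[k v] s IH] u //=.
rewrite -cats1 is_walk_cat walk_end_cons walk_end_revw IH /= andbT andbC.
by case: k => //=; rewrite bs.
Qed.

Lemma open_rcons2 W u R a c :
  open_walk W u (rcons (rcons R a) c) =
  open_walk W u (rcons R a) && cnd W a.1 c.1 a.2.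
Proof.
case: R => [|[k w] R] /=; first by case: a => ??; case: c => ?? /=; rewrite ?andbT.
rewrite -!cats1 -catA open_from_cat [in RHS]open_from_cat /=.
by case: a => ??; case: c => ?? /=; rewrite /cnd /= !andbT andbA.
Qed.

Lemma collider_flip kin k : collider (flipk k) (flipk kin) = collider kin k.
Proof. by case: kin; case: k. Qed.

Lemma open_revF W kin v prev s :
  open_walk W (walk_end v s) (rcons (revw v s) (flipk kin, prev)) = open_from W kin v s.
Proof.
elim: s kin v prev => [|[k w] s IH] kin v prev //=.
rewrite walk_end_cons open_rcons2 /= IH /cnd collider_flip andbC //.
Qed.

Lemma open_revw W u s : open_walk W (walk_end u s) (revw u s) = open_walk W u s.
Proof. by case: s => [|[k v] s] //=; rewrite walk_end_cons open_revF. Qed.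

Lemma dconn_sym d b A B W : symmetric b -> dconn d b A B W -> dconn d b B A W.
Proof.
move=> bs [u [s [uA eB ws os]]].
exists (walk_end u s), (revw u s); split => //.
- by rewrite walk_end_revw.
- by rewrite is_walk_revw.
- by rewrite open_revw.
Qed.

Definition dwalk (p : seq V) := map (fun a => (Fwd, a)) p.
Definition bwalk (p : seq V) := map (fun a => (Bwd, a)) p.

Lemma map_fst_dwalk p : map fst (dwalk p) = map (fun _ => Fwd) p.
Proof. by rewrite /dwalk -map_comp. Qed.
Lemma map_fst_bwalk p : map fst (bwalk p) = map (fun _ => Bwd) p.
Proof. by rewrite /bwalk -map_comp. Qed.
Lemma map_snd_dwalk p : map snd (dwalk p) = p.
Proof. by rewrite /dwalk -map_comp map_id. Qed.
Lemma map_snd_bwalk p : map snd (bwalk p) = p.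
Proof. by rewrite /bwalk -map_comp map_id. Qed.

Lemma walk_end_dwalk u p : walk_end u (dwalk p) = last u p.
Proof. by rewrite /walk_end /dwalk -map_comp map_id. Qed.
Lemma walk_end_bwalk u p : walk_end u (bwalk p) = last u p.
Proof. by rewrite /walk_end /bwalk -map_comp map_id. Qed.

Lemma is_walk_dwalk d b u p : is_walk d b u (dwalk p) = path d u p.
Proof. by elim: p u => //= a p IH u; rewrite IH. Qed.
Lemma is_walk_bwalk d b u p : is_walk d b u (bwalk p) = path (fun a c => d c a) u p.
Proof. by elim: p u => //= a p IH u; rewrite IH. Qed.

Lemma open_dwalk W k v p : (forall a, a \in v :: p -> a \notin W) ->
  open_from W k v (dwalk p).
Proof.
elim: p k v => //= a p IH k v H.
rewrite /= andbC IH; last by move=> c cin; apply: H; rewrite inE cin orbT.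
by have := H v (mem_head _ _); case: k => /= ->.
Qed.

Lemma open_dwalk_rcons W k v p u : (forall a, a \in v :: p -> a \notin W) ->
  open_from W k v (dwalk (rcons p u)).
Proof.
elim: p k v => [|a p IH] k v H /=; rewrite /dwalk /= -/(dwalk _).
  by have := H v (mem_head _ _); case: k => /= ->.
rewrite IH; last by move=> c cin; apply: H; rewrite inE cin orbT.
by have := H v (mem_head _ _); case: k => /= ->.
Qed.

Lemma open_bwalk W v p : (forall a, a \in v :: p -> a \notin W) ->
  open_from W Bwd v (bwalk p).
Proof.
elim: p v => //= a p IH v H.
rewrite IH ?andbT; first exact: H (mem_head _ _).
by move=> c cin; apply: H; rewrite inE cin orbT.
Qed.

Lemma open_bwalk_rcons W k v p u : cnd W k Bwd v -> (forall a, a \in p -> a \notin W) ->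
  open_from W k v (bwalk (rcons p u)).
Proof.
elim: p k v => [|a p IH] k v H1 H /=; rewrite /bwalk /= -/(bwalk _); rewrite -/(cnd W k Bwd v) H1 /=; first by [].
rewrite IH //; first by rewrite /cnd /=; exact: H (mem_head _ _).
by move=> c cin; apply: H; rewrite inE cin orbT.
Qed.

End W1.

Section W2.
Variable V : finType.
Implicit Types (d b : rel V) (W : {set V}) (s t : seq (etype * V)).

Lemma has_iotaS (P : pred nat) n :
  has P (iota 0 n.+1) = P 0 || has (fun i => P i.+1) (iota 0 n).
Proof.
rewrite /= -[1]/(1 + 0) iotaDl has_map.
by [].
Qed.

Lemma ends_nil (x u : V) : ends_with_dir_seg x u [::] = (u == x).
Proof. by rewrite /ends_with_dir_seg /= andbT orbF. Qed.

Lemma ends_cons (x u : V) k v s : ends_with_dir_seg x u ((k, v) :: s) =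
  ((u == x) && all isF (k :: map fst s)) || ends_with_dir_seg x v s.
Proof.
rewrite /ends_with_dir_seg.
rewrite [size _]/= has_iotaS; congr orb.
apply: eq_in_has => i; rewrite mem_iota add0n => hi /=.
rewrite (set_nth_default v) //= size_map //.
Qed.

Lemma ends_mem (x u : V) s : ends_with_dir_seg x u s -> x \in u :: map snd s.
Proof.
elim: s u => [|[k v] s IH] u; first by rewrite ends_nil inE eq_sym => ->.
rewrite ends_cons => /orP[/andP[/eqP -> _]|/IH]; first exact: mem_head.
by move=> H; rewrite /= inE H orbT.
Qed.

Lemma ends_cat_notF (x u : V) s t : ends_with_dir_seg x u (s ++ t) ->
  ~~ all isF (map fst t) -> ends_with_dir_seg x (walk_end u s) t.
Proof.
elim: s u => [|[k v] s IH] u //= ; rewrite ends_cons => /orP[/andP[_ aF]|/IH H] nF.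
  by move: aF; rewrite /= map_cat all_cat (negbTE nF) !andbF.
exact: H.
Qed.

Lemma ends_split (x u : V) s : ends_with_dir_seg x u s ->
  exists s1 s2, [/\ s = s1 ++ s2, walk_end u s1 = x & all isF (map fst s2)].
Proof.
elim: s u => [|[k v] s IH] u.
  by rewrite ends_nil => /eqP <-; exists [::], [::].
rewrite ends_cons => /orP[/andP[/eqP <- H]|/IH [s1 [s2 [-> e a]]]].
  by exists [::], ((k, v) :: s).
by exists ((k, v) :: s1), s2.
Qed.

Lemma run_connect d b v s : is_walk d b v s -> all isF (map fst s) ->
  connect d v (walk_end v s).
Proof.
elim: s v => [|[k w] s IH] v /=; first by rewrite connect0.
case: k => //= /andP[e ws] a.
by apply: connect_trans (connect1 e) _; apply: IH.
Qed.

End W2.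

Section G3.
Variables (V : finType) (G : ADMG V).
Local Notation d := (dir G).
Local Notation b := (bid G).

Lemma ctrans a c e : connect d a c -> connect d c e -> connect d a e.
Proof. exact: connect_trans. Qed.

Lemma acyc a c : connect d a c -> connect d c a -> a = c.
Proof.
case: (eqVneq a c) => // ne /connectP [p pth ->] back.
case: p pth ne back => [|a1 p] /=; first by move=> _ /eqP. idtac.
case/andP => e pth _ back.
have : connect d a1 a.
  apply: ctrans back; apply/connectP; by exists p.
by rewrite (negbTE (dir_acyclic e)).
Qed.

Lemma path_last_connect v p a : path d v p -> a \in v :: p -> connect d a (last v p).
Proof.
elim: p v => [|w p IH] v /=.
  by move=> _; rewrite inE => /eqP ->.
case/andP=> e pth; rewrite inE => /orP[/eqP ->|ain].
  by apply: ctrans (connect1 e) _; apply/connectP; exists p.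
exact: IH.
Qed.

Lemma inCausal x y c :
  (c \in causal G x y) = [&& connect d x c, connect d c y & c != x].
Proof.
rewrite /causal /de /an !inE.
by case: (c != x); case: (connect d x c); case: (connect d c y).
Qed.

Lemma noloop a : ~~ d a a.
Proof. by apply/negP => e; move: (dir_acyclic e); rewrite connect0. Qed.

Lemma firstW (W : {set V}) p c : path d c p -> last c p \in W -> c \notin W ->
  exists p' w', [/\ path d c (rcons p' w'), w' \in W &
                    forall a, a \in c :: p' -> a \notin W].
Proof.
elim: p c => [|a p IH] c /=; first by move=> _ ->.
case/andP => e pth lW cW.
case: (boolP (a \in W)) => aW.
  exists [::], a; split => //=; first by rewrite e.
  by move=> z; rewrite inE => /eqP ->.
have [p' [w' [pth' wW H]]] := IH a pth lW aW.
exists (a :: p'), w'; split => //=; first by rewrite e.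
by move=> z; rewrite inE => /orP[/eqP ->//|]; apply: H.
Qed.

Lemma last_rev_belast (c : V) p : last (last c p) (rev (belast c p)) = c.
Proof.
case/lastP: p => [|q e] //=.
by rewrite belast_rcons last_rcons rev_cons last_rcons.
Qed.

End G3.

Section Main.
Variables (V : finType) (G : ADMG V) (x y : V) (Z W : {set V}).
Local Notation d := (dir G).
Local Notation b := (bid G).
Local Notation dt := (dir_tilde G x y).

Hypothesis xy : x != y.
Hypothesis xZ : x \notin Z.
Hypothesis xW : x \notin W.
Hypothesis yZ : y \notin Z.
Hypothesis yW : y \notin W.
Hypothesis ZW : [disjoint Z & W].

Lemma dt_sub a c : dt a c -> d a c.
Proof. by case/andP. Qed.

Lemma notx c a : c \in causal G x y -> connect d c a -> a != x.
Proof.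
rewrite inCausal => /and3P[xc _ cx] ca; apply/eqP => ax; subst a.
by move: cx; rewrite (acyc ca xc) eqxx.
Qed.

Lemma path_dt v p : path d v p -> (forall a, a \in v :: p -> a != x) -> path dt v p.
Proof.
elim: p v => //= a p IH v /andP[e pth] H.
rewrite /dir_tilde e (negbTE (H v (mem_head _ _))) /=.
by apply: IH => // c cin; apply: H; rewrite inE cin orbT.
Qed.

Lemma I_viol (Hi : ~ (exists p, dir_path G x y p /\ has (fun v => v \in W) (x :: p))) t :
  connect d x t -> connect d t y -> t \in W -> False.
Proof.
move=> /connectP[p1 pth1 l1] /connectP[p2 pth2 l2] tW.
move: l1; case: (shortenP pth1) => p1' pth1' u1 _ l1.
move: l2; case: (shortenP pth2) => p2' pth2' u2 _ l2.
apply: Hi; exists (p1' ++ p2'); split.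
  rewrite /dir_path cat_path -l1 pth1' pth2' last_cat -l1 -l2 eqxx !andTb.
  rewrite -cat_cons cat_uniq u1 /=.
  move: u2; rewrite cons_uniq => /andP[tp2 ->]; rewrite andbT.
  apply/hasPn => a ap2; apply/negP => ap1.
  have h1 : connect d a t by rewrite l1; apply: path_last_connect pth1' ap1.
  have h2 : connect d t a by apply: (path_connect pth2'); rewrite inE ap2 orbT.
  by move: tp2; rewrite -(acyc h1 h2) ap2.
apply/hasP; exists t => //.
by rewrite -cat_cons mem_cat l1 mem_last.
Qed.

Lemma forbP c a : c \in causal G x y -> connect d c a -> a \in forb G x y.
Proof.
move=> cC ca; rewrite /forb inE; apply/orP; left.
by apply/bigcupP; exists c => //; rewrite /de inE.
Qed.

Section Fwd.
Hypothesis Ha : [disjoint (Z :|: W) & forb G x y].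

Lemma HWa c a : c \in causal G x y -> connect d c a -> a \notin W.
Proof.
move=> cC ca; apply/negP => aW.
have := disjointFr Ha (_ : a \in Z :|: W).
by rewrite inE aW orbT (forbP cC ca) => /(_ isT).
Qed.

Lemma fwd_run c (cC : c \in causal G x y) : forall t c0, connect d c c0 ->
  is_walk d b c0 t -> open_from W Fwd c0 t -> ~~ all isF (map fst t) -> False.
Proof.
elim => [|[k w] t IH] c0 cc0 //=.
case/andP => e wt /andP[ck ot].
case: k e ck ot => /= e ck ot nF.
- exact: IH (ctrans cc0 (connect1 e)) wt ot nF.
- by move: (HWa cC cc0); rewrite ck.
- by move: (HWa cC cc0); rewrite ck.
Qed.

Lemma Rlem : forall t v kin, is_walk d b v t -> open_from W kin v t ->
  walk_end v t = y -> ~~ ends_with_dir_seg x v t ->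
  exists t', [/\ is_walk dt b v t', open_from W kin v t' & walk_end v t' = y].
Proof.
elim => [|[k w] t IH] v kin.
  by move=> _ _ e _; exists [::].
rewrite /= => /andP[ek wt] /andP[ck ot] ey.
rewrite ends_cons negb_or => /andP[ne1 ne2].
case: (boolP (edge_ok dt b v k w)) => ekt.
  have [t' [wt' ot' ey']] := IH w k wt ot ey ne2.
  by exists ((k, w) :: t'); split => /=; rewrite ?ekt ?ck.
rewrite walk_end_cons in ey.
case: k ek ekt ck ne1 ot => /= ek ekt ck ne1 ot.
- move: ekt; rewrite /dir_tilde ek /= negbK => /andP[/eqP vx wC].
  subst v; move: ne1; rewrite eqxx /= => nF.
  by case: (fwd_run wC (connect0 _ w) wt ot nF).
- move: ekt; rewrite /dir_tilde ek /= negbK => /andP[/eqP wx vC].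
  move: (vC); rewrite inCausal => /and3P[_ vy _].
  case/connectP: vy => p3 pth3 l3.
  exists (dwalk p3); split.
  + rewrite is_walk_dwalk; apply: path_dt => // a ain.
    exact: notx vC (path_connect pth3 ain).
  + apply: open_dwalk => a ain.
    exact: HWa vC (path_connect pth3 ain).
  + by rewrite walk_end_dwalk -l3.
- by rewrite ek in ekt.
Qed.

End Fwd.

Section Bwd.
Hypothesis Hi : ~ (exists p, dir_path G x y p /\ has (fun v => v \in W) (x :: p)).
Hypothesis Hii : exists (z : V) (s : seq (etype * V)),
         [/\ z \in Z, walk_end z s = x, is_walk (dir G) (bid G) z s
           & open_walk W z s].
Hypothesis Hiii : ~ (exists (z : V) (s : seq (etype * V)),
         [/\ z \in Z, walk_end z s = y, is_walk (dir G) (bid G) z s,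
             open_walk W z s & ~~ ends_with_dir_seg x z s]).

Lemma bwd_W c a : c \in causal G x y -> connect d c a -> a \notin W.
Proof.
move=> cC ca; apply/negP => aW.
move: (cC); rewrite inCausal => /and3P[xc cy cx].
have cW : c \notin W by apply/negP => cW; apply: (I_viol Hi xc cy cW).
have [z [s0 [zZ e0 w0 o0]]] := Hii.
have zW : z \notin W by rewrite (disjointFr ZW zZ).
move: (xc) (cy) => /connectP[p1 pth1 l1] /connectP[p3 pth3 l3].
case/connectP: ca => p pth l.
rewrite l in aW.
have [p2 [w' [pth2 wW H2]]] := firstW pth aW cW.
have n1 : forall a, a \in x :: p1 -> a \notin W.
  move=> a' ain; apply/negP => a'W; apply: (I_viol Hi _ _ a'W).
    by apply: (path_connect pth1).
  by apply: ctrans cy; rewrite l1; apply: path_last_connect pth1 ain.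
have n3 : forall a, a \in c :: p3 -> a \notin W.
  move=> a' ain; apply/negP => a'W; apply: (I_viol Hi _ _ a'W).
    exact: ctrans xc (path_connect pth3 ain).
  by rewrite l3; apply: path_last_connect pth3 ain.
have eA : walk_end z ((s0 ++ dwalk p1) ++ dwalk (rcons p2 w')) = w'.
  by rewrite !walk_end_cat e0 !walk_end_dwalk last_rcons.
apply: Hiii; exists z,
  (s0 ++ (dwalk p1 ++ (dwalk (rcons p2 w') ++ (bwalk (rcons (rev p2) c) ++ dwalk p3)))).
rewrite !catA.
have eB : walk_end z (((s0 ++ dwalk p1) ++ dwalk (rcons p2 w')) ++ bwalk (rcons (rev p2) c)) = c.
  by rewrite walk_end_cat eA walk_end_bwalk last_rcons.
have eC : walk_end z (s0 ++ dwalk p1) = c.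
  by rewrite walk_end_cat e0 walk_end_dwalk -l1.
split => //.
- by rewrite walk_end_cat eB walk_end_dwalk -l3.
- rewrite !is_walk_cat eB eA eC e0 w0 !is_walk_dwalk pth1 pth2 pth3 is_walk_bwalk /=.
  have := rev_path (fun a c => d c a) c (rcons p2 w').
  by rewrite last_rcons belast_rcons rev_cons andbT => ->.
- apply: (@open_from_walk _ W Bwd); rewrite !open_from_cat eB eA eC e0.
  rewrite (open_walk_from zW o0) open_dwalk // open_dwalk_rcons // open_dwalk //.
  rewrite open_bwalk_rcons //.
    by rewrite map_cat last_cat map_fst_dwalk map_rcons last_rcons /cnd /=.
  by move=> a'; rewrite mem_rev => ain; apply: H2; rewrite inE ain orbT.
- apply/negP => E.
  rewrite -catA in E.
  have nF : ~~ all isF (map fst (bwalk (rcons (rev p2) c) ++ dwalk p3)).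
    by rewrite map_cat all_cat map_fst_bwalk map_rcons all_rcons.
  have := ends_mem (ends_cat_notF E nF).
  rewrite eA map_cat map_snd_bwalk map_snd_dwalk.
  have cn : forall a, a \in w' :: rcons (rev p2) c ++ p3 -> connect d c a.
    move=> a'; rewrite inE mem_cat mem_rcons inE mem_rev -orbA.
    case/or4P => [/eqP ->|/eqP ->|ain|ain].
    + by apply: (path_connect pth2); rewrite inE mem_rcons inE eqxx orbT.
    + exact: connect0.
    + by apply: (path_connect pth2); rewrite inE mem_rcons inE ain !orbT.
    + by apply: (path_connect pth3); rewrite inE ain orbT.
  by move=> /cn /(notx cC); rewrite eqxx.
Qed.

Lemma bwd_Z c a : c \in causal G x y -> connect d c a -> a \notin Z.
Proof.
move=> cC ca; apply/negP => aZ.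
move: (cC); rewrite inCausal => /and3P[xc cy cx].
case/connectP: cy => p3 pth3 l3.
case/connectP: ca => p pth l.
apply: Hiii; exists a, (bwalk (rev (belast c p)) ++ dwalk p3).
have eA : walk_end a (bwalk (rev (belast c p))) = c.
  by rewrite walk_end_bwalk l last_rev_belast.
have cn : forall u, u \in a :: rev (belast c p) ++ p3 -> connect d c u.
  move=> u; rewrite inE mem_cat mem_rev => /or3P[/eqP ->|ain|ain].
  + by rewrite l; apply: (path_connect pth); apply: mem_last.
  + by apply: (path_connect pth); apply: mem_belast ain.
  + by apply: (path_connect pth3); rewrite inE ain orbT.
split => //.
- by rewrite walk_end_cat eA walk_end_dwalk -l3.
- rewrite is_walk_cat eA is_walk_dwalk pth3 andbT is_walk_bwalk.
  have := rev_path (fun a c => d c a) c p.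
  by rewrite -l => ->.
- apply: (@open_from_walk _ W Bwd); rewrite open_from_cat eA.
  rewrite open_bwalk ?open_dwalk //.
    by move=> u uin; apply: (bwd_W cC); apply: (path_connect pth3).
  move=> u uin; apply: (bwd_W cC); apply: cn.
  by move: uin; rewrite !inE mem_cat => /orP[->|->]; rewrite ?orbT.
- apply/negP => /ends_mem.
  by rewrite map_cat map_snd_bwalk map_snd_dwalk => /cn /(notx cC); rewrite eqxx.
Qed.

End Bwd.

Lemma main_iff : valid_cond_instr G x y Z W <->
  [/\ ~ (exists p : seq V, dir_path G x y p /\ has (fun v => v \in W) (x :: p)),
      (exists (z : V) (s : seq (etype * V)),
         [/\ z \in Z, walk_end z s = x, is_walk (dir G) (bid G) z s
           & open_walk W z s]) &
      ~ (exists (z : V) (s : seq (etype * V)),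
         [/\ z \in Z, walk_end z s = y, is_walk (dir G) (bid G) z s,
             open_walk W z s & ~~ ends_with_dir_seg x z s])].
Proof.
split.
- case=> Ha Hb Hc; split.
  + move=> [p [/and3P[pth /eqP lst uq] /hasP[w win wW]]].
    have wx : w != x by apply/eqP => wx; subst w; move: xW; rewrite wW.
    have xw : connect d x w by apply: (path_connect pth).
    have wy : connect d w y by rewrite -lst; apply: path_last_connect pth win.
    have wC : w \in causal G x y by rewrite inCausal xw wy wx.
    by move: (HWa Ha wC (connect0 _ w)); rewrite wW.
  + case: (dconn_sym (bid_sym G) Hb) => z [s [zZ ex ws os]].
    by exists z, s; split => //; move: ex; rewrite inE => /eqP.
  + move=> [z [s [zZ ey ws os ne]]].
    have zW : z \notin W by rewrite (disjointFr ZW zZ).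
    have [t' [wt' ot' ey']] := Rlem Ha ws (open_walk_from zW os) ey ne.
    apply: Hc; apply: dconn_sym; first exact: bid_sym G.
    exists z, t'; split => //; first by rewrite inE ey'.
    exact: open_from_walk ot'.
- case=> Hi Hii Hiii; split.
  + rewrite disjoint_subset; apply/subsetP => a aZW; rewrite inE; apply/negP.
    rewrite /forb inE => /orP[/bigcupP[c cC]|].
      rewrite /de inE => ca; move: aZW; rewrite inE => /orP[aZ|aW].
        by move: (bwd_Z Hi Hii Hiii cC ca); rewrite aZ.
      by move: (bwd_W Hi Hii Hiii cC ca); rewrite aW.
    rewrite inE => /eqP ax; subst a.
    by move: aZW; rewrite inE (negbTE xZ) (negbTE xW).
  + case: Hii => z [s [zZ ex ws os]].
    apply: dconn_sym; first exact: bid_sym G.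
    by exists z, s; split => //; rewrite inE ex.
  + move=> Hd; case: (dconn_sym (bid_sym G) Hd) => z [s [zZ ey ws os]].
    move: ey; rewrite inE => /eqP ey.
    have E : ends_with_dir_seg x z s.
      apply/negPn/negP => ne; apply: Hiii; exists z, s; split => //.
      exact: is_walk_mono dt_sub ws.
    case: (ends_split E) => s1 [s2 [es e1 aF]].
    move: ws ey; rewrite es is_walk_cat walk_end_cat e1 => /andP[_].
    case: s2 aF {es} => [|[k c] s3] /=.
      by move=> _ _ yx; move: xy; rewrite -yx eqxx.
    case: k => //= aF /andP[ec ws3] ey.
    case/andP: ec => e nc.
    have cy : connect d c y.
      by rewrite -ey; apply: run_connect (is_walk_mono dt_sub ws3) aF.
    have cx : c != x.
      by apply/eqP => cx; subst c; move: (noloop G x); rewrite e.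
    by move: nc; rewrite eqxx inCausal (connect1 e) cy cx.
Qed.

End Main.

Theorem mainTheorem2 (V : finType) (G : ADMG V) (x y : V) (Z W : {set V}) :
  x != y -> x \notin Z -> x \notin W -> y \notin Z -> y \notin W ->
  [disjoint Z & W] ->
  valid_cond_instr G x y Z W <->
  [/\ (* (i) *)
      ~ (exists p : seq V, dir_path G x y p /\ has (fun v => v \in W) (x :: p)),
      (* (ii) *)
      (exists (z : V) (s : seq (etype * V)),
         [/\ z \in Z, walk_end z s = x, is_walk (dir G) (bid G) z s
           & open_walk W z s]) &
      (* (iii) *)
      ~ (exists (z : V) (s : seq (etype * V)),
         [/\ z \in Z, walk_end z s = y, is_walk (dir G) (bid G) z s,
             open_walk W z s & ~~ ends_with_dir_seg x z s])].
Proof. by move=> xy xZ xW yZ yW ZW; apply: main_iff. Qed.
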